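(* For any $n\in\mathbb{N}$, $(\mathcal{A}_n,L)$ is an automatic structure for $\mathrm{rps}_n$, where $L=\bigcup_{B\subseteq\mathcal{A}_n}L^B$, with $L^\emptyset=\{\varepsilon\}$, $L^B=L^{(a_1)}L^{(a_2)}\cdots L^{(a_k)}$ for $B=\{a_1<\cdots<a_k\}\neq\emptyset$, and $L^{(j)}=\{n\}^*\{n-1\}^*\cdots\{j+1\}^*\{j\}^+$ for $j\in\mathcal{A}_n$.
   Context: Let $\mathcal{A}_n=\{1<2<\cdots<n\}$. An rPS tableau is a finite (possibly empty) sequence of nonempty bottom-justified columns of boxes filled with positive integers, such that the entries of each column are weakly decreasing from top to bottom and the bottom entries of the columns form a strictly increasing sequence from left to right. Right insertion of a symbol $a$ into an rPS tableau $B$: if $a$ is strictly greater than every entry of the bottom row, append a new column consisting of $a$ at the right end; otherwise, let $z$ be the leftmost bottom-row entry with $z\geq a$ and put $a$ in a new box at the bottom of the column of $z$ (the previous entries of that column move up one box). For $w=w_1\cdots w_k$, $\mathfrak{R}_r(w)$ is obtained by starting with the empty tableau and right-inserting $w_1,\dots,w_k$ in order. The monoid $\mathrm{rps}_n$ is the quotient of $\mathcal{A}_n^*$ by the congruence $u\equiv v\iff\mathfrak{R}_r(u)=\mathfrak{R}_r(v)$; words are identified with the elements they represent. For an alphabet $\Sigma$ and a padding symbol $\$\notin\Sigma$, $\delta_R:\Sigma^*\times\Sigma^*\to((\Sigma\cup\{\$\})\times(\Sigma\cup\{\$\}))^*$ sends $(u_1\cdots u_m,v_1\cdots v_p)$ to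 the word of pairs $(u_i,v_i)$ obtained after padding the shorter word on the right with $\$$'s to equal length; $\delta_L$ is the same with padding on the left. For a monoid $M$ generated by finite $\Sigma$ and a regular language $L\subseteq\Sigma^*$ mapping onto $M$, define $L_a=\{(u,v)\in L\times L: ua=_M v\}$ and ${}_aL=\{(u,v)\in L\times L: au=_M v\}$. $(\Sigma,L)$ is an automatic structure for $M$ if $(L_a)\delta_R$ is a regular language for every $a\in\Sigma\cup\{\varepsilon\}$. *)

(* Defs.v *)
From mathcomp Require Import all_boot all_order.
Set Implicit Arguments. Unset Strict Implicit. Unset Printing Implicit Defensive.

(* ---------- rPS tableaux over positive integers (nat) ----------
   A tableau is a list of columns, left to right; each column is listed
   from its BOTTOM entry to its TOP entry (so [head] is the bottom entry). *)
Definition tableau := seq (seq nat).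

Fixpoint rins (B : tableau) (a : nat) : tableau :=
  match B with
  | [::] => [:: [:: a]]
  | c :: B' => if a <= head 0 c then (a :: c) :: B' else c :: rins B' a
  end.

Definition Rr (w : seq nat) : tableau := foldl rins [::] w.

(* The alphabet A_n = {1 < ... < n} is represented by 'I_n, the symbol
   i : 'I_n standing for the integer i+1. *)
Definition sym {n} (i : 'I_n) : nat := i.+1.
Definition RrA {n} (w : seq 'I_n) : tableau := Rr (map sym w).

Definition rps_eq {n} (u v : seq 'I_n) : Prop := RrA u = RrA v.

Definition regular {X : finType} (P : seq X -> Prop) : Prop :=
  exists (Q : finType) (q0 : Q) (d : Q -> X -> Q) (F : pred Q),
    forall w, P w <-> F (foldl d q0 w).

(* ---------- padded convolution delta_R ($ = None) ---------- *)
Definition deltaR {X : Type} (u v : seq X) : seq (option X * option X) :=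
  [seq (nth None (map Some u) i, nth None (map Some v) i)
     | i <- iota 0 (maxn (size u) (size v))].

(* L_a with a in Sigma ∪ {eps}: None encodes eps *)
Definition La {n} (L : seq 'I_n -> Prop) (a : option 'I_n)
    (p : seq (option 'I_n * option 'I_n)) : Prop :=
  exists u v, L u /\ L v /\
    rps_eq (u ++ (if a is Some x then [:: x] else [::])) v /\ p = deltaR u v.

Definition automatic_structure_rps (n : nat) (L : seq 'I_n -> Prop) : Prop :=
  regular L /\
  (forall w : seq 'I_n, exists u, L u /\ rps_eq u w) /\
  (forall a : option 'I_n, regular (La L a)).

Definition inLj (n j : nat) (w : seq nat) : Prop :=
  exists e : nat -> nat, 0 < e j /\
    w = flatten [seq nseq (e i) i | i <- rev (iota j (n - j + 1))].

Fixpoint inLseq (n : nat) (bs : seq nat) (w : seq nat) : Prop :=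
  match bs with
  | [::] => w = [::]
  | b :: bs' => exists u v, w = u ++ v /\ inLj n b u /\ inLseq n bs' v
  end.

Definition inL (n : nat) (w : seq 'I_n) : Prop :=
  exists B : {set 'I_n},
    inLseq n [seq sym i | i <- sort (fun x y : 'I_n => x <= y) (enum B)] (map sym w).

Arguments automatic_structure_rps n L : clear implicits.
Arguments inL n w : clear implicits.

(* Main.v *)
Require Import Defs.
From mathcomp Require Import all_boot all_order.
Set Implicit Arguments. Unset Strict Implicit. Unset Printing Implicit Defensive.

Lemma regular_fin (X : finType) (S : eqType) (s0 : S) (step : S -> X -> S)
  (acc : pred S) (Sf : seq S) (P : seq X -> Prop) :
  s0 \in Sf -> (forall s x, s \in Sf -> step s x \in Sf) ->
  (forall w, P w <-> acc (foldl step s0 w)) -> regular P.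
Proof.
move=> H0 Hcl HP.
pose N := size Sf.
pose enc (s : S) : 'I_N.+1 := inord (index s Sf).
pose dec (q : 'I_N.+1) : S := nth s0 Sf q.
have decK : forall s, s \in Sf -> dec (enc s) = s.
  by move=> s Hs; rewrite /dec /enc inordK ?nth_index // ltnS index_size.
have inv : forall w q, dec q \in Sf ->
    dec (foldl (fun q x => enc (step (dec q) x)) q w) = foldl step (dec q) w.
  elim=> [|x w IH] q Hq //=.
  by rewrite IH decK ?Hcl //.
exists 'I_N.+1, (enc s0), (fun q x => enc (step (dec q) x)), (fun q => acc (dec q)).
move=> w; have := inv w (enc s0); rewrite !decK //.
move=> ->; first exact: HP.
exact: H0.
Qed.

Fixpoint dR {X : Type} (u v : seq X) : seq (option X * option X) :=
  match u, v with
  | a :: u', b :: v' => (Some a, Some b) :: dR u' v'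
  | [::], _ => map (fun b => (None, Some b)) v
  | _, [::] => map (fun a => (Some a, None)) u
  end.

Lemma deltaR_step {X : Type} (u v : seq X) : u ++ v <> [::] ->
  deltaR u v = (ohead u, ohead v) :: deltaR (behead u) (behead v).
Proof.
move=> Huv; rewrite /deltaR.
have -> : maxn (size u) (size v) = (maxn (size (behead u)) (size (behead v))).+1.
  case: u Huv => [|a u]; case: v => [|b v] //= _; rewrite ?maxnSS ?maxn0 ?max0n //.
rewrite /= -add1n iotaDl -map_comp; congr (_ :: _).
  by case: u {Huv}; case: v.
apply: eq_map => i /=.
by rewrite add1n; case: u {Huv}; case: v => [|? ?] /=; rewrite ?nth_nil.
Qed.

Lemma deltaR_dR {X : Type} (u v : seq X) : deltaR u v = dR u v.
Proof.
elim: u v => [|a u IH] [|b v] //.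
- rewrite deltaR_step //=; congr (_ :: _).
  elim: v {b} => [|b v IHv] //; by rewrite deltaR_step //= IHv.
- rewrite deltaR_step //=; congr (_ :: _).
  elim: u {IH a} => [|a u IHu] //; by rewrite deltaR_step //= IHu.
- by rewrite deltaR_step //= IH.
Qed.

Definition symp {n} (p : option 'I_n * option 'I_n) : option nat * option nat :=
  (omap sym p.1, omap sym p.2).

Lemma map_symp_dR n (u v : seq 'I_n) : map symp (dR u v) = dR (map sym u) (map sym v).
Proof.
elim: u v => [|a u IH] [|b v] //=.
- by rewrite -!map_comp.
- by rewrite -!map_comp.
- by rewrite IH.
Qed.

Definition heads (T : tableau) := map (head 0) T.
Definition reading (T : tableau) : seq nat := flatten (map rev T).
Definition inrg n (a : nat) := (0 < a) && (a <= n).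
Definition colok n (c : seq nat) := (c != [::]) && sorted leq c && all (inrg n) c.
Definition validT n (T : tableau) := all (colok n) T && path ltn 0 (heads T).

Lemma rins_cat T0 T1 a : rins (T0 ++ T1) a =
  if has (fun c => a <= head 0 c) T0 then rins T0 a ++ T1 else T0 ++ rins T1 a.
Proof.
elim: T0 => [|c T0 IH] //=.
by case: ifP => //= _; rewrite IH; case: ifP.
Qed.

Lemma rins_new T a : ~~ has (fun c => a <= head 0 c) T -> rins T a = rcons T [:: a].
Proof. by move=> H; rewrite -cats1 -{1}(cats0 T) rins_cat (negbTE H). Qed.

Lemma reading_cat T1 T2 : reading (T1 ++ T2) = reading T1 ++ reading T2.
Proof. by rewrite /reading map_cat flatten_cat. Qed.

Lemma reading_rcons T c : reading (rcons T c) = reading T ++ rev c.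
Proof. by rewrite -cats1 reading_cat /reading /= cats0. Qed.

Lemma reading_rins T x :
  let m := find (fun c => x <= head 0 c) T in
  reading (rins T x) = reading (take m.+1 T) ++ x :: reading (drop m.+1 T).
Proof.
elim: T => [|c T IH] //=.
case: ifP => H /=.
  by rewrite /reading /= take0 drop0 rev_cons -cats1 /= cats0 -catA.
by move: IH; rewrite /reading /= => ->; rewrite -catA.
Qed.

Lemma rins_valid n T lo a : all (colok n) T -> path ltn lo (heads T) -> lo < a -> inrg n a ->
  all (colok n) (rins T a) && path ltn lo (heads (rins T a)).
Proof.
elim: T lo => [|c T IH] lo /=.
  by move=> _ _ -> Ha; rewrite /colok /= Ha.
case/andP=> Hc HT /andP[Hlo Hp] Hla Ha.
case: ifP => Hac /=.
  move: Hc; rewrite /colok => /andP[/andP[Hne Hs] Hr].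
  rewrite /= Ha Hr Hla HT /=.
  case: c Hne Hs Hr Hac Hlo Hp => [|h c] //= _ Hs _ Hac _ Hp.
  rewrite Hac Hs /=.
  by case: (heads T) Hp => [|h' hs] //= /andP[Hh' ->]; rewrite andbT (leq_ltn_trans Hac).
rewrite Hc Hlo /=.
by apply: IH => //; rewrite ltnNge Hac.
Qed.

Lemma foldl_rins_valid n T w : validT n T -> all (inrg n) w -> validT n (foldl rins T w).
Proof.
elim: w T => [|a w IH] T //= /andP[H1 H2] /andP[Ha Hw]; apply: IH => //.
by apply: rins_valid => //; case/andP: Ha.
Qed.

Lemma Rr_valid n w : all (inrg n) w -> validT n (Rr w).
Proof. exact: foldl_rins_valid. Qed.

Lemma col_ins T0 col : col != [::] -> sorted leq col ->
  all (fun h => h < head 0 col) (heads T0) -> foldl rins T0 (rev col) = rcons T0 col.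
Proof.
elim: col => [|a col IH] // _ Hs Hh.
move: Hh; rewrite /heads all_map => Hh.
rewrite rev_cons -cats1 foldl_cat /=.
case: col IH Hs Hh => [|b col] IH /= Hs Hh.
  by rewrite rins_new // -all_predC; apply: sub_all Hh => c /= Hc; rewrite -ltnNge.
case/andP: Hs => Hab Hs.
rewrite IH //=; last by rewrite /heads all_map; apply: sub_all Hh => c /= Hc; apply: leq_trans Hab.
rewrite -cats1 rins_cat.
have -> : has (fun c => a <= head 0 c) T0 = false.
  apply/negbTE; rewrite -all_predC; apply: sub_all Hh => c /= Hc; by rewrite -ltnNge.
by rewrite /= Hab cats1.
Qed.

Lemma foldl_reading n T0 lo T : all (fun h => h <= lo) (heads T0) ->
  all (colok n) T -> path ltn lo (heads T) -> foldl rins T0 (reading T) = T0 ++ T.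
Proof.
elim: T T0 lo => [|c T IH] T0 lo /=; first by rewrite cats0.
move=> H0 /andP[Hc HT] /andP[Hlo Hp].
rewrite /reading /= foldl_cat.
move: Hc; rewrite /colok => /andP[/andP[Hne Hs] _].
rewrite col_ins //; last by apply: sub_all H0 => h /= Hh; apply: leq_ltn_trans Hlo.
rewrite (IH _ (head 0 c)) // ?cat_rcons //.
rewrite /heads map_rcons all_rcons leqnn /=.
by apply: sub_all H0 => h /= Hh; apply: ltnW; apply: leq_ltn_trans Hlo.
Qed.

Lemma Rr_reading n T : validT n T -> Rr (reading T) = T.
Proof. by case/andP=> H1 H2; rewrite /Rr (foldl_reading (n:=n) (T0:=[::]) (lo:=0)). Qed.

Definition Lstep (rl : nat * nat) (c : nat) : option (nat * nat) :=
  let: (r, l) := rl in if c <= l then (if r < c then Some (r, c) else None) else Some (l, c).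
Definition Lstepo (o : option (nat * nat)) c := if o is Some rl then Lstep rl c else None.
Definition Lrun o (w : seq nat) := foldl Lstepo o w.
Definition h1 (T : tableau) := last 0 (heads T).
Definition h2 (T : tableau) := last 0 (belast 0 (heads T)).

Lemma h1_rcons T c : h1 (rcons T c) = head 0 c.
Proof. by rewrite /h1 /heads map_rcons last_rcons. Qed.
Lemma h2_rcons T c : h2 (rcons T c) = h1 T.
Proof. by rewrite /h2 /h1 /heads map_rcons belast_rcons. Qed.

Lemma validT_rcons n T c :
  validT n (rcons T c) = [&& validT n T, colok n c & h1 T < head 0 c].
Proof.
rewrite /validT /heads map_rcons all_rcons rcons_path /h1 /heads.
by case: (colok n c); case: (all (colok n) T); rewrite ?andbF ?andbT.
Qed.

Lemma path_le_last x s : path ltn x s -> all (fun y => y <= last x s) s.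
Proof.
elim: s x => [|a s IH] x //= /andP[_ Hp].
rewrite IH // andbT.
have := mem_last a s; rewrite inE => /orP[/eqP -> //|Hm].
have := order_path_min ltn_trans Hp => /allP/(_ _ Hm); exact: ltnW.
Qed.

Lemma colok_tail n c col : colok n (c :: col) -> col != [::] ->
  colok n col /\ c <= head 0 col.
Proof.
rewrite /colok /= => /andP[Hs /andP[_ Hr]] Hne.
case: col Hne Hs Hr => // b col _ /andP[Hcb Hs] Hr; split => //; rewrite /colok /=; exact/andP.
Qed.

Lemma last_reading_rcons T col : col != [::] -> last 0 (reading (rcons T col)) = head 0 col.
Proof.
by case: col => // h t _; rewrite reading_rcons last_cat rev_cons last_rcons.
Qed.

Lemma has_head_false (T : tableau) c : all (fun h => h < c) (heads T) ->
  has (fun col => c <= head 0 col) T = false.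
Proof.
move=> H; apply/negbTE; rewrite -all_predC; move: H; rewrite /heads all_map.
by apply: sub_all => col /= H; rewrite -ltnNge.
Qed.

Definition inLb n w := (reading (Rr w) == w) && all (inrg n) w.

Lemma Lrun_char n w : all (inrg n) w ->
  Lrun (Some (0,0)) w = if reading (Rr w) == w then Some (h2 (Rr w), h1 (Rr w)) else None.
Proof.
elim/last_ind: w => [|w c IH]; first by [].
rewrite all_rcons => /andP[Hc Hw].
rewrite /Lrun foldl_rcons -/(Lrun _ w) IH // /Rr foldl_rcons -/(Rr w).
have HT := Rr_valid Hw.
have Hc0 : 0 < c by case/andP: Hc.
case: eqP => Hrw.
- move: HT Hrw; case/lastP: (Rr w) => [|T0 col] HT Hrw.
  + by rewrite /h1 /h2 /= leqNgt Hc0 /reading /= -Hrw /= eqxx.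
  rewrite h2_rcons h1_rcons /=.
  move: HT; rewrite validT_rcons => /and3P[HT0 Hcol Hlt].
  have Hall : all (fun h => h <= h1 T0) (heads T0).
    by case/andP: HT0 => _ Hp; apply: path_le_last.
  have Hne : col != [::] by move: Hcol; rewrite /colok => /andP[/andP[]].
  case: (leqP c (head 0 col)) => Hcl.
    case: (ltnP (h1 T0) c) => Hrc.
      have Hins : rins (rcons T0 col) c = rcons T0 (c :: col).
        rewrite -cats1 rins_cat has_head_false /= ?Hcl ?cats1 //.
        by apply: sub_all Hall => h /= Hh; apply: leq_ltn_trans Hrc.
      by rewrite Hins -Hrw !reading_rcons rev_cons rcons_cat eqxx h2_rcons !h1_rcons.
    case: eqP => // Heq; exfalso.
    have Hhas : has (fun col0 => c <= head 0 col0) T0.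
      move: Hrc; rewrite /h1; case/lastP: T0 {HT0 Hall Hlt Hrw Heq} => [|T1 col1].
        by rewrite /= leqNgt Hc0.
      by rewrite /heads map_rcons last_rcons has_rcons => ->.
    move: Heq; rewrite -cats1 rins_cat Hhas cats1.
    move/(congr1 (last 0)); rewrite last_reading_rcons // last_rcons => Hl.
    by move: Hlt; rewrite Hl ltnNge Hrc.
  rewrite rins_new; last first.
    rewrite has_head_false // /heads map_rcons all_rcons Hcl /= -/(heads T0).
    by apply: sub_all Hall => h /= Hh; apply: leq_ltn_trans Hh (ltn_trans Hlt Hcl).
  by rewrite -Hrw !reading_rcons /= cats1 eqxx h2_rcons !h1_rcons.
- case: eqP => // Heq; exfalso.
  have HT' : validT n (rins (Rr w) c) by apply: (foldl_rins_valid (w := [:: c])) => //=; rewrite Hc.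
  move: HT' Heq; case/lastP: (rins (Rr w) c) => [|T1 col'].
    by move=> _ /(congr1 size); rewrite size_rcons.
  rewrite validT_rcons reading_rcons => /and3P[HT1 Hcol' Hlt'] Heq.
  case: col' Hcol' Hlt' Heq => [|c' col''] Hcol' Hlt' Heq; first by [].
  move: Heq; rewrite rev_cons -rcons_cat => /eqP; rewrite eqseq_rcons => /andP[/eqP Hw' /eqP Hcc].
  case: (col'' =P [::]) => Hnil.
    apply: Hrw; rewrite -Hw' Hnil cats0 (Rr_reading HT1) //.
  have [Hok Hle] := colok_tail Hcol' (introN eqP Hnil).
  apply: Hrw; rewrite -Hw' -reading_rcons (Rr_reading (n := n)) //.
  by rewrite validT_rcons HT1 Hok /=; apply: leq_trans Hle.
Qed.

Definition F (e : nat -> nat) j k := flatten [seq nseq (e i) i | i <- rev (iota j k)].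

Lemma F_S e j k : F e j k.+1 = nseq (e (j + k)) (j + k) ++ F e j k.
Proof. by rewrite /F -addn1 iotaD /= cats1 rev_rcons. Qed.

Lemma F_path e j k x0 : j + k <= x0.+1 ->
  path geq x0 (F e j k) && all (fun a => j <= a < j + k) (F e j k).
Proof.
elim: k x0 => [|k IH] x0 Hk; first by [].
rewrite F_S cat_path all_cat.
have [H1 H2] := andP (IH (j + k) (leqnSn _)).
have Hns : forall m y, j + k <= y -> path geq y (nseq m (j + k)) &&
    all (fun a => j <= a < j + k.+1) (nseq m (j+k)).
  elim=> [|m IHm] y Hy //=.
  have /andP[-> ->] := IHm _ (leqnn (j + k)).
  by rewrite Hy addnS ltnSn leq_addr.
have Hk' : j + k <= x0 by move: Hk; rewrite addnS ltnS.
have := Hns (e (j + k)) x0 Hk' => /andP[-> ->] /=.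
have Hl : j + k <= last x0 (nseq (e (j + k)) (j + k)).
  case: (e (j + k)) => [|m] /=; first by rewrite -ltnS.
  by elim: m => //.
apply/andP; split.
  have := IH (last x0 (nseq (e (j + k)) (j + k))) (leq_trans Hl (leqnSn _)).
  by case/andP.
by apply: sub_all H2 => a /andP[-> /=] H; rewrite addnS ltnS ltnW.
Qed.

Lemma geq_trans : transitive geq.
Proof. by move=> y x z H1 H2; apply: leq_trans H2 H1. Qed.

Lemma F_count j k u : sorted geq u -> all (fun a => j <= a < j + k) u ->
  u = F (fun i => count_mem i u) j k.
Proof.
elim: k u => [|k IH] u Hs Hr.
  by case: u Hs Hr => //= a u _ /andP[/andP[H1 H2] _]; move: H2; rewrite addn0 ltnNge H1.
set a := j + k.
have [m [u' [Hu [Hlt Hs']]]] : exists m u', u = nseq m a ++ u' /\ all (fun y => y < a) u' /\ sorted geq u'.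
  have Hle : all (fun y => y <= a) u by apply: sub_all Hr => y /andP[_]; rewrite addnS ltnS.
  elim: u Hs Hle {Hr IH} => [|b u IHu] Hs Hle; first by exists 0, [::].
  case/andP: Hle => Hb Hle.
  case: (ltngtP b a) Hb => // Hb _.
    exists 0, (b :: u); split => //; split => //=.
    rewrite Hb /=; have := order_path_min geq_trans Hs.
    by apply: sub_all => y /= Hy; apply: leq_ltn_trans Hy Hb.
  have [m [u' [Hu [Hlt Hs']]]] := IHu (path_sorted Hs) Hle.
  by exists m.+1, u'; rewrite Hb Hu.
have Hcu : forall i, i < a -> count_mem i u = count_mem i u'.
  by move=> i Hi; rewrite Hu count_cat count_nseq /= (gtn_eqF Hi).
rewrite F_S -/a.
have -> : count_mem a u = m.
  rewrite Hu count_cat count_nseq /= eqxx mul1n.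
  suff -> : count_mem a u' = 0 by rewrite addn0.
  apply/count_memPn; apply/negP => Ha; move/allP: Hlt => /(_ _ Ha); by rewrite ltnn.
have -> : F (fun i => count_mem i u) j k = F (fun i => count_mem i u') j k.
  rewrite /F; congr flatten; apply/eq_in_map => i; rewrite mem_rev mem_iota => /andP[_ Hi].
  by rewrite Hcu.
rewrite -IH //.
apply/allP => y Hy; have := allP Hr y; rewrite Hu mem_cat Hy orbT => /(_ isT) /andP[-> _] /=.
exact: (allP Hlt).
Qed.

Lemma head_min (c : seq nat) : sorted leq c -> all (fun a => head 0 c <= a) c.
Proof.
case: c => [|h t] //= Hs; rewrite leqnn /=; exact: order_path_min leq_trans Hs.
Qed.

Lemma inLj_col n j u : 0 < j <= n ->
  (inLj n j u <-> colok n (rev u) /\ head 0 (rev u) = j).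
Proof.
case/andP=> Hj0 Hjn.
have Hk : j + (n - j + 1) = n.+1 by rewrite addnA subnKC // addn1.
split.
- case=> e [Hej ->].
  set u' := F e j (n - j + 1).
  have /andP[Hp Hr] := F_path e (x0 := n) (j := j) (k := n - j + 1) (eq_leq Hk).
  have Hs : sorted leq (rev u') by rewrite rev_sorted; exact: path_sorted Hp.
  have Hju : j \in u'.
    rewrite /u' /F addn1 /= rev_cons map_rcons -cats1 flatten_cat mem_cat /= cats0.
    by rewrite mem_nseq Hej eqxx orbT.
  have Hne : rev u' != [::] by case: (rev u') (mem_rev u' j) => //; rewrite Hju.
  have Hr' : all (inrg n) (rev u').
    rewrite all_rev; apply: sub_all Hr => a /andP[H1 H2].
    by rewrite /inrg (leq_trans Hj0 H1) /= -ltnS -Hk.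
  split; first by rewrite /colok Hne Hs Hr'.
  have := head_min Hs => /allP/(_ j); rewrite mem_rev => /(_ Hju) Hhj.
  apply/eqP; rewrite eqn_leq Hhj /=.
  have Hhm : head 0 (rev u') \in u'.
    by rewrite -mem_rev; case: (rev u') Hne => // h t _; exact: mem_head.
  by have /andP[] := allP Hr _ Hhm.
- case=> Hcol Hh; move: Hcol; rewrite /colok => /andP[/andP[Hne Hs] Hr].
  exists (fun i => count_mem i u); split.
    rewrite -has_count has_pred1 -mem_rev -Hh.
    by case: (rev u) Hne => // h t _; exact: mem_head.
  apply: F_count; first by move: Hs; rewrite rev_sorted.
  rewrite Hk; apply/allP => a Ha; have Har : a \in rev u by rewrite mem_rev.
  have := allP (head_min Hs) a Har; rewrite Hh => -> /=.
  by have /andP[_ H] := allP Hr a Har; rewrite ltnS.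
Qed.

Lemma inLseq_T n bs w lo : path ltn lo bs -> all (fun b => b <= n) bs ->
  (inLseq n bs w <-> exists T, [/\ all (colok n) T, heads T = bs & reading T = w]).
Proof.
elim: bs w lo => [|b bs IH] w lo /=.
  move=> _ _; split; first by move=> ->; exists [::].
  by case=> [[|c T]] [] //= _ _ <-.
case/andP=> Hlo Hp /andP[Hbn Hbs].
have Hb : 0 < b <= n by rewrite Hbn (leq_ltn_trans (leq0n lo) Hlo).
split.
- case=> u [v [-> [Hu Hv]]].
  have [Hc Hh] := (inLj_col u Hb).1 Hu.
  have [T [HT1 HT2 HT3]] := (IH v b Hp Hbs).1 Hv.
  exists (rev u :: T); split => //=; first by rewrite Hc.
    by rewrite Hh HT2.
  by rewrite /reading /= revK -HT3.
- case=> [[|c T]] [] //= /andP[Hc HT] [Hh HT2] Hw.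
  exists (rev c), (reading T); split; first by rewrite -Hw.
  split; first by apply/(inLj_col _ Hb); rewrite revK.
  by apply/(IH _ b Hp Hbs); exists T.
Qed.

Lemma heads_inrg n T : all (colok n) T -> all (inrg n) (heads T).
Proof.
rewrite /heads all_map; apply: sub_all => c /andP[/andP[Hne _] Hr] /=.
by case: c Hne Hr => // h t _ /andP[].
Qed.

Lemma sym_inj n : injective (@sym n).
Proof. by move=> i j /succn_inj /val_inj. Qed.

Lemma all_inrg_sym n (w : seq 'I_n) : all (inrg n) (map sym w).
Proof. by apply/allP => a /mapP[i _ ->]; rewrite /inrg /sym /= ltn_ord. Qed.

Definition bsB n (B : {set 'I_n}) :=
  [seq sym i | i <- sort (fun x y : 'I_n => x <= y) (enum B)].

Lemma bsB_sorted n (B : {set 'I_n}) : sorted ltn (bsB B).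
Proof.
rewrite ltn_sorted_uniq_leq map_inj_uniq ?sort_uniq ?enum_uniq //=; last exact: sym_inj.
rewrite sorted_map; apply: (sub_sorted _ (sort_sorted _ _)).
  by move=> x y; rewrite /relpre /sym /= ltnS.
by move=> x y; apply: leq_total.
Qed.

Lemma bsB_path n (B : {set 'I_n}) : path ltn 0 (bsB B).
Proof. by have := bsB_sorted B; rewrite /bsB; case: (sort _ _) => //= i s ->. Qed.

Lemma bsB_le n (B : {set 'I_n}) : all (fun b => b <= n) (bsB B).
Proof. by apply/allP => a /mapP[i _ ->]; rewrite /sym ltn_ord. Qed.

Lemma inL_inLb n w : inL n w <-> inLb n (map sym w).
Proof.
split.
- case=> B HB.
  have [T [H1 H2 H3]] := (inLseq_T (map sym w) (bsB_path B) (bsB_le B)).1 HB.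
  have HvT : validT n T by rewrite /validT H1 H2 bsB_path.
  by rewrite /inLb -H3 (Rr_reading HvT) eqxx H3 all_inrg_sym.
- rewrite /inLb => /andP[/eqP Hr _].
  have /andP[H1 Hp] := Rr_valid (all_inrg_sym w).
  exists [set i : 'I_n | sym i \in heads (Rr (map sym w))].
  apply/(inLseq_T (lo := 0) _ (bsB_path _) (bsB_le _)); exists (Rr (map sym w)); split => //.
  apply: (irr_sorted_eq ltn_trans ltnn (path_sorted Hp) (bsB_sorted _)) => a.
  apply/idP/idP.
    move=> Ha; have /andP[Ha0 Han] := allP (heads_inrg H1) a Ha.
    have Hlt : a.-1 < n by rewrite prednK.
    apply/mapP; exists (Ordinal Hlt); last by rewrite /sym /= prednK.
    by rewrite mem_sort mem_enum inE /sym /= prednK.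
  by case/mapP => i; rewrite mem_sort mem_enum inE => Hi ->.
Qed.

Lemma Lrun_cat o w s : Lrun o (w ++ s) = Lrun (Lrun o w) s.
Proof. by rewrite /Lrun foldl_cat. Qed.

Lemma Lrun_None w : Lrun None w = None.
Proof. by elim: w. Qed.

Lemma Lrun_mono r l t r' l' : r <= l -> Lrun (Some (r, l)) t = Some (r', l') -> r <= r'.
Proof.
elim: t r l => [|c t IH] r l Hrl /=; first by case=> -> _.
rewrite /Lrun /= -/(Lrun _ t) /Lstep.
case: ifP => Hc.
  case: ifP => Hr; last by rewrite Lrun_None.
  by apply: IH; apply: ltnW.
move=> H; apply: leq_trans Hrl _; apply: IH H.
by rewrite ltnW // ltnNge Hc.
Qed.

Definition Cs xs o (w s : seq nat) :=
  if Lrun o w is Some (r, l) then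
    (r < xs) && (if s is a :: _ then (xs <= l) && (l < a) else true)
  else false.

Lemma catsI_ (w s1 s2 : seq nat) : w ++ s1 = w ++ s2 -> s1 = s2.
Proof. by move/(congr1 (drop (size w))); rewrite !drop_size_cat. Qed.

Lemma Cs_uniq_aux xs w1 s1 t s2 : Cs xs (Some (0, 0)) w1 s1 -> Cs xs (Some (0,0)) (w1 ++ t) s2 ->
  s1 = t ++ s2 -> t = [::].
Proof.
rewrite /Cs Lrun_cat.
case: (Lrun _ w1) => [[r1 l1]|] //.
case: t => [|a t] // /andP[_ Hs1] H2 Es1; exfalso.
move: Hs1; rewrite Es1 /= => /andP[Hxl Hla].
move: H2; rewrite /Lrun /= /Lstep leqNgt Hla /= -/(Lrun _ t).
case E: (Lrun _ t) => [[r2 l2]|] // /andP[Hr2 _].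
have := Lrun_mono (ltnW Hla) E => Hle.
by move: Hr2; rewrite ltnNge (leq_trans Hxl Hle).
Qed.

Lemma Cs_uniq xs w1 s1 w2 s2 : Cs xs (Some (0, 0)) w1 s1 -> Cs xs (Some (0,0)) w2 s2 ->
  w1 ++ s1 = w2 ++ s2 -> w1 = w2.
Proof.
wlog Hle : w1 s1 w2 s2 / size w1 <= size w2.
  move=> H C1 C2 E; case: (leqP (size w1) (size w2)) => Hs; first exact: (H w1 s1 w2 s2).
  by apply/esym; apply: (H w2 s2 w1 s1) => //; apply: ltnW.
move=> C1 C2 E.
have Hw2 : w2 = w1 ++ drop (size w1) w2.
  have := congr1 (take (size w1)) E; rewrite take_size_cat // takel_cat // => Ht.
  by rewrite -{1}(cat_take_drop (size w1) w2) -Ht.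
move: C2 E; rewrite Hw2 -catA => C2 /catsI_ E.
by rewrite (Cs_uniq_aux C1 C2 E) cats0.
Qed.

Lemma validT_cat n T1 T2 : validT n (T1 ++ T2) ->
  [/\ validT n T1, all (colok n) T2 & path ltn (h1 T1) (heads T2)].
Proof.
rewrite /validT /heads map_cat all_cat cat_path => /andP[/andP[H1 H2] /andP[H3 H4]].
by rewrite H1 H3.
Qed.

Lemma reading_inrg n T : all (colok n) T -> all (inrg n) (reading T).
Proof.
elim: T => [|c T IH] //= /andP[/andP[_ Hc] HT].
by rewrite /reading /= all_cat all_rev Hc IH.
Qed.

Lemma h1_in T : h1 T \in 0 :: heads T.
Proof. exact: mem_last. Qed.

Lemma h2_in T : h2 T \in 0 :: heads T.
Proof.
have := mem_last 0 (belast 0 (heads T)); rewrite -/(h2 T) inE => /orP[/eqP ->|H]; first exact: mem_head.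
by rewrite mem_belast.
Qed.

Lemma all_take_find (T : Type) (P : pred T) s : all (predC P) (take (find P s) s).
Proof. by elim: s => [|a s IH] //=; case: ifP => //= ->. Qed.

Lemma FW n xs u : 0 < xs -> inLb n u ->
  let T := Rr u in let k := (find (fun c => xs <= head 0 c) T).+1 in
  [/\ u = reading (take k T) ++ reading (drop k T),
      reading (rins T xs) = reading (take k T) ++ xs :: reading (drop k T) &
      Cs xs (Some (0,0)) (reading (take k T)) (reading (drop k T))].
Proof.
move=> Hx /andP[/eqP Hr Hu] T k.
have HT : validT n T := Rr_valid Hu.
split.
- by rewrite -reading_cat cat_take_drop Hr.
- exact: reading_rins.
have HT' : validT n (take k T ++ drop k T) by rewrite cat_take_drop.
have [HT1 HT2 Hp] := validT_cat HT'.
rewrite /Cs (Lrun_char (n := n)); last by case/andP: HT1 => H _; apply: reading_inrg H.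
rewrite (Rr_reading HT1) eqxx.
pose m := find (fun c => xs <= head 0 c) T.
have Ek : k = m.+1 by [].
have Hbefore : all (fun h => h < xs) (heads (take m T)).
  by rewrite /heads all_map; apply: sub_all (all_take_find _ T) => c /=; rewrite ltnNge.
have Hh2 : h2 (take k T) < xs.
  case: (ltnP m (size T)) => Hm.
    rewrite Ek (take_nth [::] Hm) h2_rcons.
    have := h1_in (take m T); rewrite inE => /orP[/eqP -> //|H]; exact: (allP Hbefore).
  rewrite take_oversize ?(leq_trans Hm) //.
  have Hall : all (fun h => h < xs) (heads T) by move: Hbefore; rewrite take_oversize.
  have := h2_in T; rewrite inE => /orP[/eqP -> //|H]; exact: (allP Hall).
rewrite Hh2 /=.
case E: (reading (drop k T)) => [|a s'] //.
have Hm : m < size T.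
  rewrite ltnNge; apply/negP => Hm; move: E; rewrite drop_oversize //.
  exact: leq_trans Hm (leqnSn _).
have Hxl : xs <= h1 (take k T).
  rewrite Ek (take_nth [::] Hm) h1_rcons.
  by apply: (nth_find [::] (a := fun c => xs <= head 0 c)); rewrite has_find.
rewrite Hxl /=.
move: E Hp HT2; case: (drop k T) => [|c T''] //= E /andP[Hlc _] /andP[Hc _].
have Hne : rev c != [::].
  by rewrite -size_eq0 size_rev size_eq0; case/andP: Hc => /andP[].
have Ha : a \in c.
  rewrite -mem_rev; move: E; rewrite /reading /=.
  by case: (rev c) Hne => // a' t' _ [-> _]; exact: mem_head.
have /allP/(_ a Ha) Hca := head_min (c := c) (proj2 (andP (proj1 (andP Hc)))).
exact: leq_trans Hlc Hca.
Qed.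

Arguments Lstep : simpl never.

Definition St := (nat * nat * nat * nat)%type.
Definition dead : St := (0,0,0,0).
Definition fin : St := (3,0,0,0).

Definition pstep xs (s : St) (p : option nat * option nat) : St :=
  let: (t, r, l, pv) := s in
  match p with
  | (Some a, Some b) =>
    if t == 1 then
      (if a == b then (if Lstep (r,l) a is Some (r',l') then (1,r',l',0) else dead)
       else if [&& b == xs, xs <= l, r < xs & l < a] then (2, l, a, a) else dead)
    else if t == 2 then
      (if b == pv then (if Lstep (r,l) a is Some (r',l') then (2,r',l',a) else dead) else dead)
    else dead
  | (None, Some b) =>
    if ((t == 1) && (b == xs) && (r < xs)) || ((t == 2) && (b == pv)) then fin else dead
  | _ => dead
  end.

Lemma dead_fold xs q : foldl (pstep xs) dead q = dead.
Proof. by elim: q => [|[[a|] [b|]] q IH] //=. Qed.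

Lemma fin_fold xs q : foldl (pstep xs) fin q = fin -> q = [::].
Proof. by case: q => [|[[a|] [b|]] q] //=; rewrite dead_fold. Qed.

Lemma dR_cat_eq {X : Type} (w s t : seq X) : dR (w ++ s) (w ++ t) = dR w w ++ dR s t.
Proof. by elim: w => [|a w IH] //=; rewrite IH. Qed.

Lemma Lrun_cons r l a w : Lrun (Some (r, l)) (a :: w) = Lrun (Lstep (r, l) a) w.
Proof. by []. Qed.

Lemma pre_fwd xs w r l r' l' z : Lrun (Some (r,l)) w = Some (r',l') ->
  foldl (pstep xs) (1,r,l,0) (dR w w ++ z) = foldl (pstep xs) (1,r',l',0) z.
Proof.
elim: w r l => [|a w IH] r l /=; first by case=> -> ->.
rewrite eqxx.
case E: (Lstep (r, l) a) => [[r1 l1]|]; last by rewrite Lrun_None.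
exact: IH.
Qed.

Lemma post_fwd xs s r l pv : Lrun (Some (r,l)) s != None ->
  foldl (pstep xs) (2,r,l,pv) (dR s (pv :: s)) = fin.
Proof.
elim: s r l pv => [|a s IH] r l pv /=; first by rewrite eqxx.
rewrite eqxx.
case E: (Lstep (r, l) a) => [[r1 l1]|]; last by rewrite Lrun_None.
exact: IH.
Qed.

Definition okp n (p : option nat * option nat) := if p.1 is Some a then inrg n a else true.

Lemma post_back n xs q r l pv : all (okp n) q -> foldl (pstep xs) (2,r,l,pv) q = fin ->
  exists s, [/\ q = dR s (pv :: s), Lrun (Some (r,l)) s != None & all (inrg n) s].
Proof.
elim: q r l pv => [|[[a|] [b|]] q IH] r l pv //=.
- case/andP; rewrite {1}/okp /= => Ha Hq.
  case: eqP => [<-|_]; last by rewrite dead_fold.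
  case E: (Lstep (r, l) a) => [[r1 l1]|]; last by rewrite dead_fold.
  move=> /(IH _ _ _ Hq) [s [-> Hs Hi]].
  by exists (a :: s); rewrite Lrun_cons E /= Ha Hi.
- by move=> _; rewrite dead_fold.
- move=> Hq; case: ifP => [/eqP ->|_]; last by rewrite dead_fold.
  by move/fin_fold => ->; exists [::].
- by move=> _; rewrite dead_fold.
Qed.

Lemma pre_back n xs q r l : all (okp n) q -> foldl (pstep xs) (1,r,l,0) q = fin ->
  exists w s, [/\ q = dR w w ++ dR s (xs :: s), Cs xs (Some (r,l)) w s,
    Lrun (Some (r,l)) (w ++ s) != None, all (inrg n) w & all (inrg n) s].
Proof.
elim: q r l => [|[[a|] [b|]] q IH] r l //=.
- case/andP; rewrite {1}/okp /= => Ha Hq.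
  case: eqP => [<-|Hab].
    case E: (Lstep (r, l) a) => [[r1 l1]|]; last by rewrite dead_fold.
    move=> /(IH _ _ Hq) [w [s [-> HC HL Hw Hs]]].
    by exists (a :: w), s; rewrite /Cs /= E /= Ha Hw Hs; split.
  case: ifP => [/and4P[/eqP Eb Hxl Hrx Hla]|_]; last by rewrite dead_fold.
  move=> /(post_back Hq) [s [-> HL Hs]].
  exists [::], (a :: s); rewrite /Cs /= Eb Hrx Hxl Hla Ha Hs /=; split => //.
  by rewrite /Lstep leqNgt Hla.
- by move=> _; rewrite dead_fold.
- move=> Hq; rewrite orbF; case: ifP => [/andP[/eqP -> Hrx]|_]; last by rewrite dead_fold.
  by move/fin_fold => ->; exists [::], [::]; rewrite /Cs /= Hrx.
- by move=> _; rewrite dead_fold.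
Qed.

Lemma FWex n xs u : 0 < xs -> inLb n u ->
  exists w0 s0, [/\ u = w0 ++ s0, reading (rins (Rr u) xs) = w0 ++ xs :: s0
                  & Cs xs (Some (0,0)) w0 s0].
Proof. by move=> Hx Hu; have := FW Hx Hu; rewrite /= => -[E1 E2 E3]; do 2 eexists; split; eassumption. Qed.

Lemma inLb_Lrun n u : inLb n u -> Lrun (Some (0,0)) u != None.
Proof. by case/andP=> /eqP Hr Hi; rewrite (Lrun_char Hi) Hr eqxx. Qed.

Lemma pair_char n xs q : 0 < xs -> all (okp n) q ->
  (exists u, inLb n u /\ q = dR u (reading (rins (Rr u) xs))) <->
  foldl (pstep xs) (1,0,0,0) q = fin.
Proof.
move=> Hx Hq; split.
- case=> u [Hu ->].
  have [w0 [s0 [Eu Ev HC]]] := FWex Hx Hu.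
  have HL := inLb_Lrun Hu.
  rewrite Ev {1}Eu dR_cat_eq.
  move: HC HL; rewrite /Cs Eu Lrun_cat; case E: (Lrun _ w0) => [[r' l']|] // /andP[Hrx Hs] HL.
  rewrite (pre_fwd _ _ E).
  case: s0 Hs HL {Eu Ev} => [|a s'] /=; first by rewrite eqxx Hrx.
  case/andP=> Hxl Hla HL.
  rewrite (gtn_eqF (leq_ltn_trans Hxl Hla)) eqxx Hxl Hrx Hla /=.
  by apply: post_fwd; move: HL; rewrite /Lstep leqNgt Hla.
- move/(pre_back Hq) => [w [s [Eq HC HL Hw Hs]]].
  have Hu : inLb n (w ++ s).
    rewrite /inLb all_cat Hw Hs andbT.
    by move: HL; rewrite (Lrun_char (n := n)) ?all_cat ?Hw ?Hs // andbT; by case: (reading (Rr (w ++ s)) == w ++ s).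
  have [w0 [s0 [Eu Ev HC0]]] := FWex Hx Hu.
  have Ew := Cs_uniq HC HC0 Eu.
  move: Eu Ev; rewrite -Ew => /catsI_ <- Ev.
  by exists (w ++ s); split => //; rewrite Ev Eq dR_cat_eq.
Qed.

Lemma lift_sym n (s : seq nat) : all (inrg n) s -> exists u : seq 'I_n, map sym u = s.
Proof.
elim: s => [|a s IH] /=; first by exists [::].
case/andP=> /andP[Ha0 Han] /IH [u Hu].
have Hlt : a.-1 < n by rewrite prednK.
by exists (Ordinal Hlt :: u); rewrite /= Hu /sym /= prednK.
Qed.

Lemma foldl_map' (A B C : Type) (f : A -> B -> A) (g : C -> B) z s :
  foldl f z (map g s) = foldl (fun a x => f a (g x)) z s.
Proof. by elim: s z => [|x s IH] z //=. Qed.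

Definition SfL n : seq (option (nat * nat)) :=
  None :: [seq Some (val p.1, val p.2) | p <- enum [set: 'I_n.+1 * 'I_n.+1]].

Lemma inSfL n r l : r <= n -> l <= n -> Some (r, l) \in SfL n.
Proof.
move=> Hr Hl; rewrite inE; apply/orP; right; apply/mapP.
have Hr' : r < n.+1 by []. have Hl' : l < n.+1 by [].
by exists (Ordinal Hr', Ordinal Hl'); rewrite // mem_enum in_setT.
Qed.

Lemma SfL_inv n o : o \in SfL n -> o = None \/ exists r l, [/\ o = Some (r, l), r <= n & l <= n].
Proof.
rewrite inE => /orP[/eqP ->|/mapP[[r l] _ ->]]; first by left.
by right; exists (val r), (val l); split => //; rewrite -ltnS ltn_ord.
Qed.

Lemma Lstep_bound n r l c r' l' : Lstep (r, l) c = Some (r', l') -> r <= n -> l <= n -> c <= n ->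
  r' <= n /\ l' <= n.
Proof.
rewrite /Lstep; case: ifP => _; first case: ifP => _ //.
  by case=> <- <-.
by case=> <- <-.
Qed.

Lemma Lstepo_SfL n o c : o \in SfL n -> c <= n -> Lstepo o c \in SfL n.
Proof.
case/SfL_inv => [->|[r [l [-> Hr Hl]]]] Hc /=; first exact: mem_head.
case E: (Lstep (r, l) c) => [[r' l']|]; last exact: mem_head.
by have [H1 H2] := Lstep_bound E Hr Hl Hc; apply: inSfL.
Qed.

Definition SfP n : seq St :=
  [seq (val q.1.1.1, val q.1.1.2, val q.1.2, val q.2)
     | q <- enum [set: 'I_4 * 'I_n.+1 * 'I_n.+1 * 'I_n.+1]].

Lemma inSfP n t r l pv : t < 4 -> r <= n -> l <= n -> pv <= n -> (t, r, l, pv) \in SfP n.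
Proof.
move=> Ht Hr Hl Hp; apply/mapP.
have Hr' : r < n.+1 by []. have Hl' : l < n.+1 by []. have Hp' : pv < n.+1 by [].
by exists (Ordinal Ht, Ordinal Hr', Ordinal Hl', Ordinal Hp'); rewrite // mem_enum in_setT.
Qed.

Lemma SfP_inv n s : s \in SfP n ->
  exists t r l pv, [/\ s = (t, r, l, pv), r <= n, l <= n & pv <= n].
Proof.
case/mapP => [[[[t r] l] pv]] _ ->.
by exists (val t), (val r), (val l), (val pv); split => //; rewrite -ltnS ltn_ord.
Qed.

Lemma pstep_SfP n xs s p : s \in SfP n ->
  (if p.1 is Some a then a <= n else true) -> (if p.2 is Some b then b <= n else true) ->
  pstep xs s p \in SfP n.
Proof.
have Hd : dead \in SfP n by apply: inSfP.
have Hf : fin \in SfP n by apply: inSfP.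
case/SfP_inv => t [r [l [pv [-> Hr Hl Hp]]]].
case: p => [[a|] [b|]] //= Ha Hb.
- case: ifP => _.
    case: ifP => _.
      case E: (Lstep (r, l) a) => [[r' l']|] //.
      by have [H1 H2] := Lstep_bound E Hr Hl Ha; apply: inSfP.
    by case: ifP => _ //; apply: inSfP.
  case: ifP => _ //; case: ifP => _ //.
  case E: (Lstep (r, l) a) => [[r' l']|] //.
  by have [H1 H2] := Lstep_bound E Hr Hl Ha; apply: inSfP.
- by case: ifP.
Qed.

Lemma inL_uniq n u v : inL n u -> inL n v -> rps_eq u v -> u = v.
Proof.
move=> /inL_inLb/andP[/eqP Hu _] /inL_inLb/andP[/eqP Hv _] E.
apply: (inj_map (@sym_inj n)); rewrite -Hu -Hv; congr reading; exact: E.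
Qed.

Lemma reg_L n : regular (inL n).
Proof.
apply: (regular_fin (S := option (nat * nat)) (s0 := Some (0,0))
   (step := fun o (i : 'I_n) => Lstepo o (sym i)) (acc := fun o => o != None) (Sf := SfL n)).
- exact: inSfL.
- by move=> s x Hs; apply: Lstepo_SfL => //; exact: ltn_ord.
- move=> w; rewrite -(foldl_map' Lstepo sym) -/(Lrun _ _) (Lrun_char (all_inrg_sym w)).
  split => [/inL_inLb /andP[/eqP -> _]|H]; first by rewrite eqxx.
  apply/inL_inLb; rewrite /inLb all_inrg_sym andbT; move: H.
  by case: (reading _ == _).
Qed.

Lemma surj_L n (w : seq 'I_n) : exists u, inL n u /\ rps_eq u w.
Proof.
have HT := Rr_valid (all_inrg_sym w).
have Hri := reading_inrg (proj1 (andP HT)).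
have [u Hu] := lift_sym Hri.
exists u; split.
  by apply/inL_inLb; rewrite Hu /inLb (Rr_reading HT) eqxx Hri.
by rewrite /rps_eq /RrA Hu (Rr_reading HT).
Qed.

Definition step3 {n} (o : option (nat * nat)) (p : option 'I_n * option 'I_n) :=
  match p with
  | (Some a, Some b) => if a == b then Lstepo o (sym a) else None
  | _ => None
  end.

Lemma fold3_dR n o (u : seq 'I_n) : foldl step3 o (dR u u) = Lrun o (map sym u).
Proof. by elim: u o => [|a u IH] o //=; rewrite eqxx IH. Qed.

Lemma fold3_None n (p : seq (option 'I_n * option 'I_n)) : foldl step3 None p = None.
Proof. by elim: p => [|[[a|] [b|]] p IH] //=; case: ifP. Qed.

Lemma fold3_inv n (p : seq (option 'I_n * option 'I_n)) o :
  foldl step3 o p != None -> exists u : seq 'I_n, p = dR u u.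
Proof.
elim: p o => [|[[a|] [b|]] p IH] o /=; first by exists [::].
- case: (a =P b) => [<-|_]; last by rewrite fold3_None.
  by move/IH => [u ->]; exists (a :: u).
- by rewrite fold3_None.
- by rewrite fold3_None.
- by rewrite fold3_None.
Qed.

Lemma reg_None n : regular (La (inL n) None).
Proof.
apply: (regular_fin (S := option (nat * nat)) (s0 := Some (0,0))
   (step := step3) (acc := fun o => o != None) (Sf := SfL n)).
- exact: inSfL.
- move=> s [[a|] [b|]] Hs /=; try exact: mem_head.
  by case: ifP => _; [apply: Lstepo_SfL => //; exact: ltn_ord | exact: mem_head].
- move=> p; split.
    case=> u [v [Hu [Hv [E ->]]]].
    rewrite cats0 in E; have Euv := inL_uniq Hu Hv E.
    rewrite -Euv deltaR_dR fold3_dR.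
    by apply: inLb_Lrun; apply/inL_inLb.
  move=> H; have [u Eu] := fold3_inv H.
  move: H; rewrite Eu fold3_dR (Lrun_char (all_inrg_sym u)) => H.
  have Hu : inL n u.
    apply/inL_inLb; rewrite /inLb all_inrg_sym andbT; move: H.
    by case: (reading _ == _).
  by exists u, u; rewrite cats0 deltaR_dR.
Qed.

Lemma symp_inj n : injective (@symp n).
Proof.
move=> p q E; have E1 := congr1 fst E; have E2 := congr1 snd E.
case: p q E1 E2 {E} => [a b] [a' b'] /= E1 E2; congr pair.
  by case: a a' E1 => [a|] [a'|] //= [] /val_inj ->.
by case: b b' E2 => [b|] [b'|] //= [] /val_inj ->.
Qed.

Lemma okp_symp n (p : seq (option 'I_n * option 'I_n)) : all (okp n) (map symp p).
Proof.
by apply/allP => q /mapP[[[a|] b] _ ->] //=; rewrite /okp /= /inrg /sym /= ltn_ord.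
Qed.

Lemma reg_Some n (x : 'I_n) : regular (La (inL n) (Some x)).
Proof.
have Hx : 0 < sym x by [].
apply: (regular_fin (S := St) (s0 := (1,0,0,0))
   (step := fun s p => pstep (sym x) s (symp p)) (acc := fun s => s == fin) (Sf := SfP n)).
- by apply: inSfP => //; exact: ltn_ord.
- move=> s [[a|] [b|]] Hs; apply: pstep_SfP => //=; exact: ltn_ord.
- move=> p; rewrite -(foldl_map' (pstep (sym x)) symp); split.
    case=> u [v [Hu [Hv [E ->]]]].
    apply/eqP; apply/(pair_char (n := n)) => //; first exact: okp_symp.
    exists (map sym u); split; first exact/inL_inLb.
    rewrite deltaR_dR map_symp_dR; congr dR.
    have /andP[/eqP Hrv _] := (inL_inLb v).1 Hv.
    by rewrite -Hrv; move: E; rewrite /rps_eq /RrA map_cat /Rr foldl_cat /= => <-.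
  move/eqP/(pair_char (n := n) Hx (okp_symp p)) => [U [HU Eq]].
  have [u Hu] := lift_sym (proj2 (andP HU)).
  have HRU : validT n (Rr U) by apply: Rr_valid; case/andP: HU.
  have HT' : validT n (rins (Rr U) (sym x)).
    by apply: (foldl_rins_valid (w := [:: sym x])) => //=; rewrite /inrg /sym /= ltn_ord.
  have Hri := reading_inrg (proj1 (andP HT')).
  have [v Hv] := lift_sym Hri.
  exists u, v; refine (conj _ (conj _ (conj _ _))).
  - by apply/(inL_inLb u); rewrite Hu.
  - by apply/(inL_inLb v); rewrite Hv /inLb (Rr_reading HT') eqxx Hri.
  - by rewrite /rps_eq /RrA map_cat Hu Hv (Rr_reading HT') /Rr foldl_cat.
  - by rewrite deltaR_dR; apply: (inj_map (@symp_inj n)); rewrite map_symp_dR Hu Hv Eq.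
Qed.

Theorem theorem6p3 (n : nat) : automatic_structure_rps n (inL n).
Proof.
split; first exact: reg_L.
split; first exact: surj_L.
by case=> [x|]; [exact: reg_Some | exact: reg_None].
Qed.
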